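(* Assume $q<\ell$. Fix $Z_0\in S^{\ell}_{q,p}$ and $E_0\in\Lambda^{\ell}_{Z_0}$. Let $\mathcal{S}_0=\{E_0\}$ and for $j\ge1$ define inductively $$\mathcal{S}_j=\bigcup_{F\in\mathcal{S}_{j-1}}\{E\in N(\ell,m):\dim E=\ell,\ \dim(E\cap F)\ge\ell-1\}.$$ Then $$\bigcup_{E\in\mathcal{S}_q}Gr(q,E)=S^{\ell}_{q,p}.$$
   Context: Let $q<p$ and $q\le\ell\le(p+q)/2$ be positive integers, $m=p+q-\ell$. $Gr(q,p)$ is the Grassmannian of $q$-planes in $\mathbb{C}^{p+q}$; $\langle u,v\rangle_{\ell,m}=-\sum_{i=1}^{\ell}u_i\bar v_i+\sum_{i=\ell+1}^{p+q}u_i\bar v_i$; $S^{\ell}_{q,p}=\{Z\in Gr(q,p):\langle\cdot,\cdot\rangle_{\ell,m}|_Z=0\}$. $N(\ell,m)$ is the set of subspaces $F\subset\mathbb{C}^{p+q}$ with $\langle\cdot,\cdot\rangle_{\ell,m}|_F=0$, and for $F\in N(\ell,m)$ and $n\ge\dim F$, $\Lambda^n_F=\{E\in N(\ell,m):\dim E=n,\ F\subset E\}$. For a subspace $E$, $Gr(q,E)$ denotes the set of $q$-dimensional subspaces of $E$. *)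

(* Defs.v *)
(* Complex numbers are modelled by an arbitrary
   numClosedFieldType C. *)
From HB Require Import structures.
From mathcomp Require Import all_boot all_order all_algebra.
Set Implicit Arguments. Unset Strict Implicit. Unset Printing Implicit Defensive.
Import Order.TTheory GRing.Theory Num.Theory.
Local Open Scope ring_scope.

(* The Hermitian form <u,v>_{l,m} on C^n, n = p+q, m = n - l:
   - sum_{i<=l} u_i conj(v_i) + sum_{i>l} u_i conj(v_i)  (1-based in the paper,
   here indices are 0-based: i < l gets the minus sign). *)
Definition herm_form (C : numClosedFieldType) (n l : nat) (u v : 'rV[C]_n) : C :=
  \sum_(i < n) (if (i < l)%N then -1 else 1) * u 0 i * Num.conj (v 0 i).

Definition isotropic (C : numClosedFieldType) (n l : nat)
  (F : {vspace 'rV[C]_n}) : Prop :=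
  forall u v, u \in F -> v \in F -> herm_form l u v = 0.

Definition S_set (C : numClosedFieldType) (l q p : nat)
  (Z : {vspace 'rV[C]_(p + q)}) : Prop :=
  \dim Z = q /\ isotropic l Z.

Definition Lambda (C : numClosedFieldType) (N l n : nat)
  (F E : {vspace 'rV[C]_N}) : Prop :=
  isotropic l E /\ \dim E = n /\ (F <= E)%VS.

Fixpoint S_fam (C : numClosedFieldType) (N l : nat) (E0 : {vspace 'rV[C]_N})
  (j : nat) (E : {vspace 'rV[C]_N}) : Prop :=
  match j with
  | 0 => E = E0
  | j'.+1 => exists F, S_fam l E0 j' F /\
       isotropic l E /\ \dim E = l /\ (l - 1 <= \dim (E :&: F))%N
  end.

Definition Gr (C : numClosedFieldType) (N q : nat) (E Z : {vspace 'rV[C]_N}) : Prop :=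
  \dim Z = q /\ (Z <= E)%VS.

Arguments S_set {C} l q p Z.
Arguments Lambda {C N} l n F E.
Arguments S_fam {C N} l E0 j E.
Arguments Gr {C N} q E Z.
Arguments isotropic {C n} l F.
Arguments herm_form {C n} l u v.

(* Main.v *)
Require Import Defs.
From HB Require Import structures.
From mathcomp Require Import all_boot all_order all_algebra.
Import Order.TTheory GRing.Theory Num.Theory.
Local Open Scope ring_scope.
From mathcomp Require Import ring.

Set Implicit Arguments. Unset Strict Implicit.

Section S.
Variables (C : numClosedFieldType) (n l : nat).
Implicit Types (u v w z : 'rV[C]_n).

Lemma hfDl a u v w : herm_form l (a *: u + v) w = a * herm_form l u w + herm_form l v w.
Proof.
rewrite /herm_form mulr_sumr -big_split /=; apply: eq_bigr => i _.
rewrite !mxE; ring.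
Qed.

Lemma hfDr a u v w : herm_form l u (a *: v + w) = a^* * herm_form l u v + herm_form l u w.
Proof.
rewrite /herm_form mulr_sumr -big_split /=; apply: eq_bigr => i _.
rewrite !mxE rmorphD rmorphM /=; ring.
Qed.

Lemma hf0l w : herm_form l 0 w = 0.
Proof. by rewrite /herm_form big1 // => i _; rewrite mxE; ring. Qed.

Lemma hf0r w : herm_form l w 0 = 0.
Proof. by rewrite /herm_form big1 // => i _; rewrite mxE rmorph0; ring. Qed.

Definition wz z : 'cV[C]_n := \col_i ((if (i < l)%N then -1 else 1) * (z 0 i)^*).
Definition fz z : 'Hom('rV[C]_n, 'rV[C]_1) := linfun (mulmxr (wz z)).

Lemma fzE z u : fz z u = u *m wz z.
Proof. by rewrite /fz lfunE. Qed.

Lemma hf_fz z u : herm_form l u z = (fz z u) 0 0.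
Proof.
rewrite fzE mxE /herm_form; apply: eq_bigr => i _; rewrite mxE; ring.
Qed.

Lemma mem_kerfz z u : (u \in lker (fz z)) = (herm_form l u z == 0).
Proof.
rewrite memv_ker hf_fz; apply/eqP/eqP => [->|H]; first by rewrite mxE.
by rewrite [LHS]mx11_scalar H; apply/matrixP => i j; rewrite !mxE !ord1 /= ?mulr0n ?mulr1n.
Qed.

Lemma dim_capker z (F : {vspace 'rV[C]_n}) : (\dim F <= (\dim (F :&: lker (fz z))).+1)%N.
Proof.
have H : (\dim (fz z @: F) <= 1)%N.
  by apply: leq_trans (dimvS (subvf _)) _; rewrite dimvf /dim /= mul1n.
rewrite -(limg_ker_dim (fz z) F).
move: H; set a := \dim (F :&: _); set b := \dim (_ @: _) => H.
by rewrite -addn1 leq_add2l.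
Qed.

End S.
Section Bound.
Variables (C : numClosedFieldType) (n l : nat) (hl : (l <= n)%N).

Definition Pm : 'M[C]_(n, l) := \matrix_(i, j) ((i == widen_ord hl j)%:R).
Definition gP : 'Hom('rV[C]_n, 'rV[C]_l) := linfun (mulmxr Pm).

Lemma iso_dim (V : {vspace 'rV[C]_n}) : isotropic l V -> (\dim V <= l)%N.
Proof.
move=> isoV.
have K0 : (V :&: lker gP = 0)%VS.
  apply/eqP; rewrite -subv0; apply/subvP => u; rewrite memv_cap memv_ker memv0.
  case/andP=> uV /eqP gu.
  have ul : forall i : 'I_n, (i < l)%N -> u 0 i = 0.
    move=> i il.
    move: gu; rewrite /gP lfunE /= => gu.
    have := congr1 (fun M : 'rV[C]_l => M 0 (Ordinal il)) gu.
    rewrite /= mxE (bigD1 i) //= big1 ?mxE.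
      have -> : i == widen_ord hl (Ordinal il) by apply/eqP/val_inj.
      by rewrite mulr1 addr0.
    move=> k /negbTE kn; rewrite mxE.
    have -> : (k == widen_ord hl (Ordinal il)) = false.
      by apply/negbTE/eqP => /(congr1 val) /= e; move: kn; rewrite (_ : k = i) ?eqxx //; apply: val_inj.
    by rewrite mulr0.
  have h0 := isoV u u uV uV.
  have hs : \sum_(i < n) u 0 i * (u 0 i)^* = 0.
    rewrite -[RHS]h0 /herm_form; apply: eq_bigr => i _.
    have [il|il] := boolP (i < l)%N; rewrite ?il ?(negbTE il).
      by rewrite (ul i il) !mulr0 !mul0r.
    by rewrite mul1r.
  apply/eqP/rowP => i; rewrite mxE.
  apply/eqP; rewrite -mul_conjC_eq0; apply/eqP.
  exact: (psumr_eq0P (fun i _ => mul_conjC_ge0 (u 0 i)) hs).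
have := limg_ker_dim gP V; rewrite K0 dimv0 add0n => <-.
by apply: leq_trans (dimvS (subvf _)) _; rewrite dimvf /dim /= mul1n.
Qed.

End Bound.

Section Step.
Variables (C : numClosedFieldType) (n l : nat) (hl : (l <= n)%N).
Implicit Types (u v w z : 'rV[C]_n).

Lemma hfDl1 u v w : herm_form l (u + v) w = herm_form l u w + herm_form l v w.
Proof. by rewrite -{1}(scale1r u) hfDl mul1r. Qed.
Lemma hfZl a u w : herm_form l (a *: u) w = a * herm_form l u w.
Proof. by rewrite -(addr0 (a *: u)) hfDl hf0l addr0. Qed.
Lemma hfDr1 u v w : herm_form l u (v + w) = herm_form l u v + herm_form l u w.
Proof. by rewrite -{1}(scale1r v) hfDr rmorph1 mul1r. Qed.
Lemma hfZr a u w : herm_form l u (a *: w) = a^* * herm_form l u w.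
Proof. by rewrite -(addr0 (a *: w)) hfDr hf0r addr0. Qed.
Lemma hf_conj u v : herm_form l u v = (herm_form l v u)^*.
Proof.
rewrite /herm_form rmorph_sum; apply: eq_bigr => i _.
rewrite !rmorphM /= conjCK; case: (i < l)%N; rewrite ?rmorphN1 ?rmorph1; ring.
Qed.

Lemma step (F W : {vspace 'rV[C]_n}) z :
  isotropic l F -> \dim F = l -> (W <= F)%VS -> herm_form l z z = 0 ->
  (forall w, w \in W -> herm_form l w z = 0) ->
  exists F', isotropic l F' /\ \dim F' = l /\ (l - 1 <= \dim (F' :&: F))%N /\
     (W + <[z]> <= F')%VS.
Proof.
move=> isoF dF WF zz Wz.
have [zF|zF] := boolP (z \in F).
  exists F; split=> //; split=> //; split; first by rewrite capvv dF leq_subr.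
  by rewrite subv_add WF -memvE.
set K := (F :&: lker (fz l z))%VS.
have zK : z \notin K by rewrite memv_cap (negbTE zF).
have isoF' : isotropic l (K + <[z]>)%VS.
  move=> u v /memv_addP [a aK [c /vlineP [k ->] ->]] /memv_addP [b bK [d /vlineP [k' ->] ->]].
  move: aK bK; rewrite !memv_cap !mem_kerfz => /andP [aF /eqP az] /andP [bF /eqP bz].
  rewrite hfDl1 !hfDr1 !hfZl !hfZr isoF // az (hf_conj z b) bz zz rmorph0.
  by rewrite !mulr0 !add0r.
have dK := dim_capker l z F; rewrite -/K dF in dK.
have lt : (\dim K < \dim (K + <[z]>))%N.
  rewrite (ltn_leqif (dimv_leqif_sup (addvSl K <[z]>))).
  apply/negP => /subvP /(_ z) H; move: zK; rewrite H //; by rewrite memvE addvSr.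
have le := iso_dim hl isoF'.
exists (K + <[z]>)%VS; split=> //; split.
  by apply/eqP; rewrite eqn_leq le /=; apply: leq_trans dK lt.
split.
  have : (K <= (K + <[z]>) :&: F)%VS by rewrite subv_cap addvSl capvSl.
  move/dimvS; apply: leq_trans; rewrite -ltnS; case: l dK {le} => //= l' dK.
  by rewrite subn1.
rewrite subv_add addvSr andbT; apply: subv_trans (addvSl _ _).
rewrite subv_cap WF; apply/subvP => w wW; rewrite mem_kerfz; exact/eqP/Wz.
Qed.

End Step.

Lemma iso_sub (C : numClosedFieldType) n l (U V : {vspace 'rV[C]_n}) :
  isotropic l V -> (U <= V)%VS -> isotropic l U.
Proof. by move=> iV UV u v uU vU; apply: iV; apply: (subvP UV). Qed.

Lemma sfam_inv (C : numClosedFieldType) n l (E0 F : {vspace 'rV[C]_n}) j :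
  isotropic l E0 -> \dim E0 = l -> S_fam l E0 j F -> isotropic l F /\ \dim F = l.
Proof. by case: j => [/= ? ? ->|j ? ? [G [_ [? [? _]]]]]. Qed.

Lemma reach (C : numClosedFieldType) n l (hl : (l <= n)%N) (E0 : {vspace 'rV[C]_n}) :
  isotropic l E0 -> \dim E0 = l ->
  forall j (s : seq 'rV[C]_n), (size s <= j)%N -> isotropic l <<s>>%VS ->
  exists F, S_fam l E0 j F /\ (<<s>> <= F)%VS.
Proof.
move=> iE dE; elim=> [|j IH] s.
  by case: s => // _ _; exists E0; rewrite span_nil sub0v.
case: s => [|z s] hs iso.
  have [F [SF _]] := IH [::] (leq0n _) iso.
  have [iF dF] := sfam_inv iE dE SF.
  exists F; split; last by rewrite span_nil sub0v.
  by exists F; split=> //; split=> //; split=> //; rewrite capvv dF leq_subr.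
move: iso; rewrite span_cons => iso.
have [F [SF sF]] := IH s hs (iso_sub iso (addvSr _ _)).
have [iF dF] := sfam_inv iE dE SF.
have zin : z \in (<[z]> + <<s>>)%VS by rewrite memvE addvSl.
have [F' [iF' [dF' [cF' sF']]]] := step hl iF dF sF (iso z z zin zin)
  (fun w wS => iso w z (subvP (addvSr _ _) w wS) zin).
exists F'; split; first by exists F.
by rewrite addvC.
Qed.

Theorem lemma3p2 (C : numClosedFieldType) (p q l : nat)
  (hq : (0 < q)%N) (hqp : (q < p)%N) (hql : (q < l)%N)
  (hl2 : (l.*2 <= p + q)%N)
  (Z0 E0 : {vspace 'rV[C]_(p + q)})
  (hZ0 : S_set l q p Z0) (hE0 : Lambda l l Z0 E0) :
  forall Z : {vspace 'rV[C]_(p + q)},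
    (exists E, S_fam l E0 q E /\ Gr q E Z) <-> S_set l q p Z.
Proof.
have hl : (l <= p + q)%N by apply: leq_trans hl2; rewrite -addnn leq_addr.
case: hE0 => iE [dE _] Z; split.
  case=> E [SE [dZ ZE]]; have [iEE _] := sfam_inv iE dE SE.
  by split=> //; exact: iso_sub iEE ZE.
case=> dZ iZ.
have sb : <<vbasis Z>>%VS = Z := span_basis (vbasisP Z).
have h1 : (size (vbasis Z) <= q)%N by rewrite size_tuple dZ.
have h2 : isotropic l <<vbasis Z>>%VS by rewrite sb.
have [F [SF sF]] := @reach C _ l hl E0 iE dE q (vbasis Z) h1 h2.
by exists F; split=> //; split=> //; rewrite -sb.
Qed.
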